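(* There exists a family $(L_n)_{n\ge2}$ of $\omega$-languages, $L_n$ over an alphabet with $n$ letters, such that for every $n\ge 2$, $L_n$ is recognized by a limit-deterministic Büchi automaton with $3n+2$ states, but $L_n$ is not recognized by any deterministic parity automaton with fewer than $n!$ states.
   Context: A limit-deterministic Büchi automaton (LDBA) is a nondeterministic Büchi automaton $(Q,q_0,\Sigma,\delta,\alpha)$ together with $Q_d\subseteq Q$ such that all accepting transitions are within $Q_d$, the transition relation is deterministic on $Q_d$, and $Q_d$ is closed under successors. A deterministic parity automaton has a deterministic transition function and a coloring of transitions by positive integers; a word is accepted iff the minimal color seen infinitely often on its run is even. *)

(* Defs.v *)
From mathcomp Require Import all_boot.
Set Implicit Arguments. Unset Strict Implicit. Unset Printing Implicit Defensive.

Definition oword (Sigma : Type) := nat -> Sigma.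

Definition inf_often (P : nat -> Prop) : Prop := forall N, exists i, N <= i /\ P i.

Record NBA (Q Sigma : finType) := mkNBA {
  nba_init  : Q;
  nba_delta : Q -> Sigma -> Q -> bool;
  nba_acc   : Q -> Sigma -> Q -> bool
}.

Definition nba_run (Q Sigma : finType) (A : NBA Q Sigma) (w : oword Sigma)
  (r : nat -> Q) : Prop :=
  r 0 = nba_init A /\ forall i, nba_delta A (r i) (w i) (r i.+1).

Definition nba_accepts (Q Sigma : finType) (A : NBA Q Sigma) (w : oword Sigma) : Prop :=
  exists r, nba_run A w r /\ inf_often (fun i => nba_acc A (r i) (w i) (r i.+1)).

Definition is_LDBA (Q Sigma : finType) (A : NBA Q Sigma) (Qd : {set Q}) : Prop :=
  (forall p a q, nba_acc A p a q -> nba_delta A p a q /\ p \in Qd /\ q \in Qd) /\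
  (forall p a q1 q2, p \in Qd -> nba_delta A p a q1 -> nba_delta A p a q2 -> q1 = q2) /\
  (forall p a q, p \in Qd -> nba_delta A p a q -> q \in Qd).

Record DPA (Q Sigma : finType) := mkDPA {
  dpa_init  : Q;
  dpa_trans : Q -> Sigma -> Q;
  dpa_col   : Q -> Sigma -> nat
}.

Definition dpa_wf (Q Sigma : finType) (A : DPA Q Sigma) : Prop :=
  forall q a, 0 < dpa_col A q a.

Fixpoint dpa_run (Q Sigma : finType) (A : DPA Q Sigma) (w : oword Sigma) (i : nat) : Q :=
  match i with
  | 0 => dpa_init A
  | i'.+1 => dpa_trans A (dpa_run A w i') (w i')
  end.

Definition dpa_color_at (Q Sigma : finType) (A : DPA Q Sigma) (w : oword Sigma) (i : nat) : nat :=
  dpa_col A (dpa_run A w i) (w i).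

Definition dpa_accepts (Q Sigma : finType) (A : DPA Q Sigma) (w : oword Sigma) : Prop :=
  exists c, ~~ odd c /\
    inf_often (fun i => dpa_color_at A w i = c) /\
    (forall c', inf_often (fun i => dpa_color_at A w i = c') -> c <= c').

Definition recognizes_nba (Q Sigma : finType) (A : NBA Q Sigma) (L : oword Sigma -> Prop) :=
  forall w, L w <-> nba_accepts A w.

Definition recognizes_dpa (Q Sigma : finType) (A : DPA Q Sigma) (L : oword Sigma -> Prop) :=
  forall w, L w <-> dpa_accepts A w.

(* Main.v *)
Require Import Defs.
From mathcomp Require Import all_boot zify.
From Stdlib Require Import ClassicalEpsilon.
Set Implicit Arguments. Unset Strict Implicit.

Definition pb (P : Prop) : bool :=
  if excluded_middle_informative P then true else false.
Lemma pbE (P : Prop) : pb P <-> P.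
Proof. by rewrite /pb; case: excluded_middle_informative. Qed.

Definition Lang n (w : oword 'I_n) : Prop := exists i : 'I_n,
  inf_often (fun k => w k = i) /\ exists N, forall k, N <= k -> ~ (w k = i /\ w k.+1 = i).

Section Lower.
Variable n : nat.
Variable d : 'I_n.
Variable Q : finType.
Variable B : DPA Q 'I_n.

Definition fin (q : Q) (s : seq 'I_n) : Q := foldl (dpa_trans B) q s.

Definition per (u v : seq 'I_n) : oword 'I_n := fun k =>
  if k < size u then nth d u k else nth d v ((k - size u) %% size v).

Lemma per_cyc u v m j : j < size v -> per u v (size u + m * size v + j) = nth d v j.
Proof.
move=> hj; rewrite /per ifF; last by lia.
by rewrite -addnA addKn modnMDl modn_small.
Qed.

Lemma run_pre u v k : k <= size u -> dpa_run B (per u v) k = fin (dpa_init B) (take k u).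
Proof.
elim: k => [|k IH] hk /=; first by rewrite take0.
rewrite IH ?(ltnW hk) // (take_nth d hk) /fin foldl_rcons /per hk //.
Qed.

Lemma run_cyc u v p : fin (dpa_init B) u = p -> fin p v = p ->
  forall m j, j <= size v -> dpa_run B (per u v) (size u + m * size v + j) = fin p (take j v).
Proof.
move=> hu hv; elim=> [|m IHm] j.
  elim: j => [|j IHj] hj.
    by rewrite /= !addn0 run_pre // take_size take0.
  rewrite addnS /= IHj ?(ltnW hj) // per_cyc // (take_nth d hj) /fin foldl_rcons //.
elim: j => [|j IHj] hj.
  by rewrite addn0 mulSnr addnA IHm // take_size hv take0.
rewrite addnS /= IHj ?(ltnW hj) // per_cyc // (take_nth d hj) /fin foldl_rcons //.
Qed.

Definition cv p v j := dpa_col B (fin p (take j v)) (nth d v j).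

Lemma col_cyc u v p : fin (dpa_init B) u = p -> fin p v = p ->
  forall m j, j < size v -> dpa_color_at B (per u v) (size u + m * size v + j) = cv p v j.
Proof.
by move=> hu hv m j hj; rewrite /dpa_color_at (run_cyc hu hv) ?per_cyc // ltnW.
Qed.

Lemma decomp (u v : seq 'I_n) k : 0 < size v -> size u <= k ->
  k = size u + (k - size u) %/ size v * size v + (k - size u) %% size v.
Proof. by move=> hv hk; rewrite -addnA -divn_eq subnKC. Qed.

Lemma inf_col u v p c : fin (dpa_init B) u = p -> fin p v = p -> 0 < size v ->
  inf_often (fun i => dpa_color_at B (per u v) i = c) <-> exists2 j, j < size v & cv p v j = c.
Proof.
move=> hu hv hs; split.
  move=> /(_ (size u)) [k [hk hc]].
  exists ((k - size u) %% size v); first by rewrite ltn_pmod.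
  by rewrite -(col_cyc hu hv ((k - size u) %/ size v)) ?ltn_pmod // -decomp.
move=> [j hj hc] N; exists (size u + N * size v + j); split.
  have := leq_pmulr N hs; lia.
by rewrite (col_cyc hu hv).
Qed.

Definition EvenMin p v := exists2 j, j < size v &
  ~~ odd (cv p v j) /\ forall j', j' < size v -> cv p v j <= cv p v j'.

Lemma acc_iff u v p : fin (dpa_init B) u = p -> fin p v = p -> 0 < size v ->
  dpa_accepts B (per u v) <-> EvenMin p v.
Proof.
move=> hu hv hs; split.
  move=> [c [hc [/(inf_col _ hu hv hs) [j hj hcj] hmin]]].
  exists j => //; split; first by rewrite hcj.
  move=> j' hj'; rewrite hcj; apply: hmin; apply/(inf_col _ hu hv hs); by exists j'.
move=> [j hj [he hm]]; exists (cv p v j); split => //; split.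
  by apply/(inf_col _ hu hv hs); exists j.
by move=> c' /(inf_col _ hu hv hs) [j' hj' <-]; apply: hm.
Qed.

Lemma cv_cat p v1 v2 j : fin p v1 = p ->
  cv p (v1 ++ v2) j = if j < size v1 then cv p v1 j else cv p v2 (j - size v1).
Proof.
move=> h; rewrite /cv take_cat nth_cat; case: ifP => // _.
by rewrite /fin foldl_cat -/(fin p v1) h.
Qed.

Lemma evenmin_cat p v1 v2 : fin p v1 = p -> EvenMin p v1 -> EvenMin p v2 -> EvenMin p (v1 ++ v2).
Proof.
move=> h [j1 h1 [e1 m1]] [j2 h2 [e2 m2]].
have key : forall j', j' < size (v1 ++ v2) -> minn (cv p v1 j1) (cv p v2 j2) <= cv p (v1 ++ v2) j'.
  move=> j'; rewrite size_cat cv_cat //; case: ifP => hj' hlt.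
    by rewrite geq_min m1.
  by rewrite geq_min m2 ?orbT //; lia.
case: (leqP (cv p v1 j1) (cv p v2 j2)) => hc.
  exists j1; first by rewrite size_cat; lia.
  rewrite cv_cat // h1; split => // j' /key; rewrite /minn; case: ifP => //; lia.
exists (size v1 + j2); first by rewrite size_cat; lia.
rewrite cv_cat // ifF; last by lia.
rewrite addKn; split => // j' /key; rewrite /minn; case: ifP => //; lia.
Qed.


Definition noxx (x : 'I_n) v := forall j, j.+1 < size v -> ~ (nth d v j = x /\ nth d v j.+1 = x).
Definition endok (x : 'I_n) v := v = [::] \/ nth d v (size v).-1 <> x.
Definition hasdbl (a : 'I_n) v := exists j, j.+1 < size v /\ nth d v j = a /\ nth d v j.+1 = a.

Lemma lang_acc u v x : x \in v -> noxx x v -> nth d v (size v).-1 <> x -> Lang (per u v).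
Proof.
move=> xv hn he; have hs : 0 < size v by case: v xv {hn he}.
exists x; split.
  move=> N; exists (size u + N * size v + index x v); split.
    have := leq_pmulr N hs; lia.
  by rewrite per_cyc ?index_mem // nth_index.
exists (size u) => k hk [h1 h2].
move: h1 h2; rewrite (decomp hs hk).
set m := _ %/ _; set j := _ %% _.
have hj : j < size v by rewrite ltn_pmod.
rewrite per_cyc // -addnS => h1.
case: (ltnP j.+1 (size v)) => hj1.
  by rewrite per_cyc // => h2; apply: (hn j hj1).
have -> : j = (size v).-1 by lia.
by move: h1; have -> : j = (size v).-1 by lia.
Qed.

Lemma lang_rej u v : 0 < size v -> (forall a, a \in v -> hasdbl a v) -> ~ Lang (per u v).
Proof.
move=> hs hd [i [hinf [N hN]]].
have [k [hk hki]] := hinf (maxn N (size u)).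
have hku : size u <= k by move: hk; rewrite geq_max => /andP [].
move: hki; rewrite (decomp hs hku) per_cyc ?ltn_pmod // => hki.
have : i \in v by rewrite -hki mem_nth // ltn_pmod.
move=> /hd [j0 [hj0 [e1 e2]]].
apply: (hN (size u + N * size v + j0)); first by have := leq_pmulr N hs; lia.
by rewrite -addnS !per_cyc //; lia.
Qed.

Definition Px (A : {set 'I_n}) x s := all (fun a => a \in A) s /\ noxx x s /\ endok x s.

Lemma fin_cat p s t : fin p (s ++ t) = fin (fin p s) t.
Proof. by rewrite /fin foldl_cat. Qed.

Lemma Px_cat A x s t : Px A x s -> Px A x t -> Px A x (s ++ t).
Proof.
move=> [a1 [n1 e1]] [a2 [n2 e2]]; split; first by rewrite all_cat a1 a2.
split.
  move=> j; rewrite size_cat => hj; rewrite !nth_cat.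
  case: (ltnP j.+1 (size s)) => h1.
    by rewrite (ltnW h1); apply: n1.
  case: (ltnP j (size s)) => h2.
    have ej : j = (size s).-1 by lia.
    case: e1 => [es | ne]; first by move: h2; rewrite es.
    by rewrite -ej in ne; case.

  rewrite subSn //; apply: n2; rewrite -subSn // ltn_subLR //; exact: ltnW.
case: t a2 n2 e2 => [|b t'] a2 n2 e2; first by rewrite cats0.
case: e2 => [// | ne]; right.
have -> : (size (s ++ b :: t')).-1 = size s + size t' by rewrite size_cat /= addnS.
by rewrite nth_cat ltnNge leq_addr /= addKn.
Qed.

Lemma Px_nil A x : Px A x [::].
Proof. by split => //; split; [move=> j | left]. Qed.

Lemma Px_sub A x s : all (fun a => a \in A :\ x) s -> Px A x s.
Proof.
move=> h; have hx : forall j, j < size s -> nth d s j != x.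
  by move=> j hj; have := allP h _ (mem_nth d hj); rewrite in_setD1 => /andP [].
split.
  by apply/allP => a /(allP h); rewrite in_setD1 => /andP [].
split.
  by move=> j hj [h1 _]; move: (hx j (ltnW hj)); rewrite h1 eqxx.
case: s h hx => [|a s] h hx; [by left | right].
by apply/eqP; apply: hx => /=; lia.
Qed.

Lemma Px_two (A : {set 'I_n}) (x a b : 'I_n) : a \in A -> b \in A -> b != x -> Px A x [:: a; b].
Proof.
move=> ha hb hbx; split; first by rewrite /= ha hb.
split.
  move=> [|j] //= _ [_ e]; by move: hbx; rewrite e eqxx.
by right => /= e; move: hbx; rewrite e eqxx.
Qed.

Lemma hasdbl_catl a s t : hasdbl a s -> hasdbl a (s ++ t).
Proof.
move=> [j [hj [e1 e2]]]; exists j; rewrite size_cat !nth_cat hj (ltnW hj); split => //.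
exact: (leq_trans hj (leq_addr _ _)).
Qed.

Lemma hasdbl_catr a s t : hasdbl a t -> hasdbl a (s ++ t).
Proof.
move=> [j [hj [e1 e2]]]; exists (size s + j).
have f1 : (size s + j < size s) = false by rewrite ltnNge leq_addr.
have f2 : (size s + j.+1 < size s) = false by rewrite ltnNge leq_addr.
rewrite size_cat !nth_cat f1 -addnS f2 !addKn ltn_add2l; by split.
Qed.

Lemma ergodic (R : Q -> Q -> Prop) : (forall q, R q q) ->
  (forall a b c, R a b -> R b c -> R a c) ->
  forall q, exists p, R q p /\ forall r, R p r -> R r p.
Proof.
move=> Rr Rt q.
pose reach p := [set r | pb (R p r)].
have qS : q \in [set p | pb (R q p)] by rewrite inE; apply/pbE.
case: (arg_minnP (fun p => #|reach p|) qS) => p pS0 pmin.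
have pS : R q p.
  by apply/pbE; have := (pS0 : p \in [set p0 | pb (R q p0)]); rewrite inE.
exists p; split => // r hr.
have sub : reach r \subset reach p.
  by apply/subsetP => z; rewrite !inE => /pbE hz; apply/pbE; apply: Rt hz.
have hle : #|reach p| <= #|reach r|.
  have rS : r \in [set p0 | pb (R q p0)] by rewrite inE; apply/pbE; apply: Rt hr.
  exact: pmin rS.
have hcard : #|reach r| = #|reach p| by apply/eqP; rewrite eqn_leq hle subset_leq_card.
move: (subset_cardP hcard) => /(_ sub) /(_ p).
by rewrite !inE => e; apply/pbE; rewrite e; apply/pbE.
Qed.

Definition Rx A x a b := exists s, Px A x s /\ fin a s = b.
Definition reachA (A : {set 'I_n}) q r := exists s, all (fun a => a \in A) s /\ fin q s = r.
Definition Reach0 p := exists u, fin (dpa_init B) u = p.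
Definition cyc A x v := Px A x v /\ x \in v /\ (forall a, a \in A -> a != x -> hasdbl a v).
Definition Tset A q x := [set r | pb (reachA A q r /\ exists v, cyc A x v /\ fin r v = r)].
Definition RS A q := [set r | pb (reachA A q r)].

Lemma Rx_trans A x a b c : Rx A x a b -> Rx A x b c -> Rx A x a c.
Proof.
by move=> [s [ps hs]] [t [pt ht]]; exists (s ++ t); rewrite fin_cat hs ht; split => //; apply: Px_cat.
Qed.

Lemma Rx_refl A x a : Rx A x a a.
Proof. by exists [::]; split => //; apply: Px_nil. Qed.

Lemma disj (Hrec : recognizes_dpa B (@Lang n)) A q x y r : Reach0 q -> x != y ->
  r \in Tset A q x -> r \in Tset A q y -> False.
Proof.
move=> [u hu] hxy; rewrite !inE => /pbE [[s [_ hs]] [vx [cx hx]]] /pbE [_ [vy [cy hy]]].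
have hr : fin (dpa_init B) (u ++ s) = r by rewrite fin_cat hu.
have accx : forall z v, cyc A z v -> fin r v = r -> EvenMin r v.
  move=> z v [[_ [hn he]] [zv _]] hv.
  have hsz : 0 < size v by case: v zv {hn he hv}.
  apply/(acc_iff hr hv hsz); apply/(Hrec _).1; apply: (lang_acc _ zv hn).
  by case: he => [e|//]; rewrite e in hsz.
have ex := accx x vx cx hx; have ey := accx y vy cy hy.
have hc : fin r (vx ++ vy) = r by rewrite fin_cat hx hy.
have hsz : 0 < size (vx ++ vy).
  by case: cx => _ [xv _]; rewrite size_cat; case: vx xv {hx ex hc}.
have := evenmin_cat hx ex ey; move/(acc_iff hr hc hsz)/(Hrec _).2.
apply: lang_rej => // a; rewrite mem_cat => ha.
have aA : a \in A.
  case/orP: ha => ha; [case: cx => [[/allP al _] _] | case: cy => [[/allP al _] _]]; exact: al.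
case: (eqVneq a x) => [e | ax].
  by rewrite e in aA *; apply: hasdbl_catr; case: cy => _ [_ h]; apply: h.
by apply: hasdbl_catl; case: cx => _ [_ h]; apply: h.
Qed.

Lemma build (A : {set 'I_n}) (x : 'I_n) (p r : Q) : (forall r', Rx A x p r' -> Rx A x r' p) -> Rx A x p r ->
  forall l : seq 'I_n, (forall a, a \in l -> a \in A /\ a != x) ->
  exists v, Px A x v /\ fin r v = r /\ forall a, a \in l -> hasdbl a v.
Proof.
move=> erg hpr.
have piece : forall w, Px A x w -> exists t, Px A x t /\ fin (fin r w) t = r.
  move=> w pw; have h1 : Rx A x p (fin r w) by apply: Rx_trans hpr _; exists w.
  exact: Rx_trans (erg _ h1) hpr.
elim=> [|a l IH] hl.
  by exists [::]; split; [apply: Px_nil | split].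
have IH' : forall b, b \in l -> b \in A /\ b != x by move=> b hb; apply: hl; rewrite inE hb orbT.
have [v [pv [fv hv]]] := IH IH'.
have [aA ax] := hl a (mem_head _ _).
have pw := Px_two aA aA ax.
have [t [pt ft]] := piece _ pw.
exists (([:: a; a] ++ t) ++ v); split; first by apply: Px_cat => //; apply: Px_cat.
split; first by rewrite !fin_cat ft fv.
move=> b; rewrite inE => /orP [/eqP -> | hb].
  by apply: hasdbl_catl; apply: hasdbl_catl; exists 0.
by apply: hasdbl_catr; apply: hv.
Qed.

Lemma Tbig (A : {set 'I_n}) (q : Q) (x : 'I_n) k : (forall (A' : {set 'I_n}) q', #|A'| = k -> Reach0 q' -> k`! <= #|RS A' q'|) ->
  #|A| = k.+1 -> 0 < k -> x \in A -> Reach0 q -> k`! <= #|Tset A q x|.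
Proof.
move=> IH hA hk xA [u hu].
have [p [hqp erg]] := ergodic (@Rx_refl A x) (@Rx_trans A x) q.
have hAx : #|A :\ x| = k by move: hA; rewrite (cardsD1 x A) xA add1n => [[]].
have hp : Reach0 p by case: hqp => s [_ hs]; exists (u ++ s); rewrite fin_cat hu.
apply: leq_trans (IH _ _ hAx hp) _.
apply: subset_leq_card; apply/subsetP => r; rewrite !inE => /pbE [s [hs hr]].
have hpr : Rx A x p r by exists s; split => //; apply: Px_sub.
apply/pbE; split.
  case: (Rx_trans hqp hpr) => w [[aw _] hw]; by exists w.
have [a0 a0A] : exists a0, a0 \in A :\ x by apply/card_gt0P; rewrite hAx.
move: (a0A); rewrite in_setD1 => /andP [a0x a0A'].
have pw := Px_two xA a0A' a0x.
have h1 : Rx A x p (fin r [:: x; a0]) by apply: Rx_trans hpr _; exists [:: x; a0].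
have [t0 [pt0 ft0]] := Rx_trans (erg _ h1) hpr.
have hl : forall b, b \in enum (A :\ x) -> b \in A /\ b != x.
  by move=> b; rewrite mem_enum in_setD1 => /andP [bx bA]; split.
have [v [pv [fv hv]]] := build erg hpr hl.
exists (([:: x; a0] ++ t0) ++ v); split; last by rewrite !fin_cat ft0 fv.
split; first by apply: Px_cat => //; apply: Px_cat.
split; first by rewrite !mem_cat inE eqxx.
move=> a aA ax; apply: hasdbl_catr; apply: hv.
by rewrite mem_enum in_setD1 ax aA.
Qed.

Lemma union_mem (T : 'I_n -> {set Q}) l r :
  r \in foldr (fun x S => T x :|: S) set0 l -> exists2 x, x \in l & r \in T x.
Proof.
elim: l => [|a l IH] /=; first by rewrite inE.
rewrite inE => /orP [h | /IH [x xl hx]]; first by exists a; rewrite ?mem_head.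
by exists x => //; rewrite inE xl orbT.
Qed.

Lemma union_card (T : 'I_n -> {set Q}) c l : uniq l ->
  (forall x y r, x \in l -> y \in l -> x != y -> r \in T x -> r \in T y -> False) ->
  (forall x, x \in l -> c <= #|T x|) ->
  size l * c <= #|foldr (fun x S => T x :|: S) set0 l|.
Proof.
elim: l => [|a l IH] //= /andP [al ul] hd hc.
rewrite cardsU.
have -> : T a :&: foldr (fun x S => T x :|: S) set0 l = set0.
  apply/setP => r; rewrite !inE; apply/negbTE/negP => /andP [ra /union_mem [x xl rx]].
  apply: (hd a x r) => //; rewrite ?mem_head ?inE ?xl ?orbT //.
  by apply: contraNneq al => ->.
rewrite cards0 subn0 mulSn.
apply: leq_add; first by apply: hc; rewrite mem_head.
apply: IH => //.
  by move=> x y r xl yl; apply: hd; rewrite inE ?xl ?yl orbT.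
by move=> x xl; apply: hc; rewrite inE xl orbT.
Qed.

Lemma RS_self A q : q \in RS A q.
Proof. by rewrite inE; apply/pbE; exists [::]. Qed.

Lemma count (Hrec : recognizes_dpa B (@Lang n)) k : forall (A : {set 'I_n}) q, #|A| = k -> Reach0 q -> k`! <= #|RS A q|.
Proof.
elim: k => [|k IH] A q hA hq.
  by rewrite fact0 card_gt0; apply/set0Pn; exists q; apply: RS_self.
case: (posnP k) => hk.
  by rewrite hk /= card_gt0; apply/set0Pn; exists q; apply: RS_self.
have xA : forall x, x \in enum A -> x \in A by move=> x; rewrite mem_enum.
have U := union_card (T := Tset A q) (c := k`!) (enum_uniq A)
  (fun x y r _ _ hxy => disj Hrec hq hxy)
  (fun x xl => Tbig IH hA hk (xA x xl) hq).
rewrite -cardE hA -factS in U.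
apply: leq_trans U _; apply: subset_leq_card; apply/subsetP => r /union_mem [x _].
by rewrite !inE => /pbE [h _]; apply/pbE.
Qed.

Lemma lower (Hrec : recognizes_dpa B (@Lang n)) : n`! <= #|Q|.
Proof.
have h0 : Reach0 (dpa_init B) by exists [::].
have := count Hrec (A := [set: 'I_n]) ltac:(by rewrite cardsT card_ord) h0.
move=> h; apply: leq_trans h (max_card _).
Qed.

End Lower.

Definition dn (N p a q : nat) : bool :=
  if p == 0 then [|| q == 0, (0 < q <= N) && (a != q.-1) | (N < q <= N + N) && (a == q - N.+1)]
  else if p <= N then q == (if a == p.-1 then p + N else p)
  else if p <= N + N then (a != p - N.+1) && (q == p - N)
  else false.
Definition an N p a q := dn N p a q && (0 < p <= N) && (a == p.-1).
Definition comp N p := if p <= N then p.-1 else p - N.+1.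

Ltac blia := repeat (apply/andP; split); try (apply/eqP); lia.

Lemma dn_start N iv a : iv < N -> dn N 0 a (if a == iv then iv + 1 + N else iv + 1).
Proof. move=> h; rewrite /dn /=; case: (eqVneq a iv) => [->|e]; apply/or3P; [constructor 3 | constructor 2]; blia. Qed.

Lemma dn_step N iv a b : iv < N -> ~ (b = iv /\ a = iv) ->
  dn N (if b == iv then iv + 1 + N else iv + 1) a (if a == iv then iv + 1 + N else iv + 1).
Proof.
move=> h hn; rewrite /dn; case: (eqVneq b iv) => eb; case: (eqVneq a iv) => ea; rewrite ifF; try lia.
all: repeat (case: ifP => ?); blia.
Qed.

Lemma dn_inv N p a q : 0 < p <= N + N -> dn N p a q -> 0 < q <= N + N /\ comp N q = comp N p.
Proof.
move=> hp; rewrite /dn /comp; case: (eqVneq a p.-1) => e;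
 repeat (case: ifP => ?); try (move=> /andP[]); repeat (move=> /eqP ?); try done; split; lia.
Qed.

Lemma dn_noii N p iv q q' : 0 < p <= N + N -> comp N p = iv -> dn N p iv q -> dn N q iv q' -> False.
Proof.
move=> hp; rewrite /dn /comp; case: (eqVneq iv p.-1) => e;
 repeat (case: ifP => ?); try (move=> /andP[]); repeat (move=> /eqP ?); try done;
 try (move=> /andP[]); repeat (move=> /eqP ?); try done; lia.
Qed.

Lemma dn_det N p a q1 q2 : 0 < p -> dn N p a q1 -> dn N p a q2 -> q1 = q2.
Proof.
move=> hp; rewrite /dn; case: (eqVneq a p.-1) => e;
 repeat (case: ifP => ?); try (move=> /andP[]); repeat (move=> /eqP ?); try done;
 try (move=> /andP[]); repeat (move=> /eqP ?); try done; lia.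
Qed.

Lemma dn_pos N p a q : 0 < p -> dn N p a q -> 0 < q.
Proof.
move=> hp; rewrite /dn; case: (eqVneq a p.-1) => e;
 repeat (case: ifP => ?); try (move=> /andP[]); repeat (move=> /eqP ?); try done; lia.
Qed.

Definition theNBA n (h : 0 < 3 * n + 2) : NBA 'I_(3 * n + 2) 'I_n :=
  mkNBA (Ordinal h) (fun (p : 'I_(3 * n + 2)) (a : 'I_n) (q : 'I_(3 * n + 2)) => dn n p a q)
    (fun (p : 'I_(3 * n + 2)) (a : 'I_n) (q : 'I_(3 * n + 2)) => an n p a q).
Definition theQd n : {set 'I_(3 * n + 2)} := [set s | 0 < nat_of_ord s].

Lemma ldba n h : is_LDBA (theNBA h) (theQd n).
Proof.
split; [|split].
- move=> p a q /= /andP [/andP [hd hp] ha]; split => //; rewrite !inE.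
  have hp0 : 0 < nat_of_ord p by case/andP: hp.
  by split => //; apply: dn_pos hd.
- move=> p a q1 q2; rewrite inE => hp /= h1 h2; apply: val_inj; exact: dn_det h1 h2.
- by move=> p a q; rewrite !inE => hp /= hd; apply: dn_pos hd.
Qed.

Lemma rec n h : recognizes_nba (theNBA h) (@Lang n).
Proof.
move=> w; split.
  move=> [i [hinf [N0 hN]]].
  pose f k := if k <= N0 then 0 else if nat_of_ord (w k.-1) == nat_of_ord i then nat_of_ord i + 1 + n else nat_of_ord i + 1.
  have hi := ltn_ord i.
  have fb : forall k, f k < 3 * n + 2 by move=> k; rewrite /f; repeat case: ifP => _; lia.
  pose r k : 'I_(3 * n + 2) := Ordinal (fb k).
  have nii : forall k, N0 < k -> ~ (nat_of_ord (w k.-1) = nat_of_ord i /\ nat_of_ord (w k) = nat_of_ord i).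
    move=> k hk [e1 e2]; apply: (hN k.-1); first lia.
    by rewrite prednK; [split; apply: val_inj | lia].
  have tr : forall k, dn n (f k) (w k) (f k.+1).
    move=> k; rewrite /f; have [hk|hk|hk] := ltngtP k N0.
    - by rewrite /dn.
    - exact: dn_step hi (nii k hk).
    - exact: dn_start.
  exists r; split; first split.
  - by apply: val_inj; rewrite /= /f leq0n.
  - by move=> k; apply: tr.
  move=> M; have [k [hk hki]] := hinf (maxn M N0).+1.
  exists k; split; first lia.
  have hk0 : N0 < k by lia.
  have hf : f k = nat_of_ord i + 1.
    rewrite /f ifF; last lia. rewrite ifF // ; apply/eqP => e; apply: (nii k hk0); split => //.
    by rewrite hki.
  rewrite /= /an tr /= hf hki; apply/andP; split; [lia | apply/eqP; lia].
move=> [r [[r0 rs] hacc]].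
have [k0 [_ a0]] := hacc 0.
move: a0; rewrite /= /an => /andP [/andP [d0 b0] e0].
set i := w k0.
have inv : forall m, 0 < r (k0 + m) <= n + n /\ comp n (r (k0 + m)) = nat_of_ord i.
  elim=> [|m [hb hc]].
    rewrite addn0 /comp ifT; last lia. split; first lia. by apply/esym/eqP.
  rewrite [k0 + m.+1]addnS; have [hb' hc'] := dn_inv hb (rs (k0 + m)); split => //; congruence.
exists i; split.
  move=> M; have [k [hk ak]] := hacc (maxn M k0).
  exists k; split; first lia.
  move: ak; rewrite /= /an => /andP [/andP [_ bk] ek].
  have [_ hc] := inv (k - k0); rewrite subnKC in hc; last lia.
  apply: ord_inj; rewrite -hc /comp ifT; last lia. exact/eqP.
exists k0 => k hk [e1 e2].
have [hb hc] := inv (k - k0); rewrite subnKC in hb hc; try lia.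
have t1 := rs k; have t2 := rs k.+1; rewrite /= e1 in t1; rewrite /= e2 in t2.
exact: (dn_noii hb hc t1 t2).
Qed.

Theorem mainTheorem5 :
  exists L : forall n : nat, oword 'I_n -> Prop,
    forall n : nat, 2 <= n ->
      (exists (A : NBA 'I_(3 * n + 2) 'I_n) (Qd : {set 'I_(3 * n + 2)}),
          is_LDBA A Qd /\ recognizes_nba A (L n)) /\
      (forall (Q : finType) (B : DPA Q 'I_n),
          #|Q| < n`! -> dpa_wf B -> ~ recognizes_dpa B (L n)).
Proof.
exists (fun n => @Lang n) => n hn; split.
  have h : 0 < 3 * n + 2 by rewrite addn2.
  exists (theNBA h), (theQd n); split; [exact: ldba | exact: rec].
move=> Q B hQ _ hrec.
have d : 'I_n := Ordinal (ltnW hn).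
have := lower d hrec; lia.
Qed.
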